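(* Let $\widehat\Sigma$ be an integral $\mathbb Q$-affine polyhedral complex with support $\mathbb R^N$ admitting a strictly convex function $\widehat H\in\operatorname{Rat}(\widehat\Sigma)$, and let $\Sigma'$ be a subcomplex of $\widehat\Sigma$. Then every facewise affine function $F$ on $\widehat\Sigma$ can be written as $F=H_1-H_2$ with $H_1,H_2$ strictly convex facewise affine functions on $\widehat\Sigma$. Moreover, if the restriction of $F$ to $|\Sigma'|$ belongs to $\operatorname{Rat}(\Sigma')$, then $H_1,H_2$ can be chosen with restrictions to $|\Sigma'|$ belonging to $\operatorname{Rat}(\Sigma')$.
   Context: An integral $\mathbb Q$-affine polyhedral complex in $\mathbb R^N$ is a finite collection of polyhedra $\{u:L_i(u)\ge0\}$ with $L_i(u)=\langle m_i,u\rangle+\gamma_i$, $m_i\in\mathbb Z^N$, $\gamma_i\in\mathbb Q$, closed under faces, any two meeting in a common face. A function on $|\Sigma|$ is facewise (integral $\mathbb Q$-)affine if its restriction to each cell is the restriction of an (integral $\mathbb Q$-)affine function on $\mathbb R^N$. $\operatorname{Rat}(\Sigma)$ is the set of $\infty$ and facewise integral $\mathbb Q$-affine functions on $\Sigma$ having the same slope near infinity along any two parallel rays (unbounded one-dimensional cells with the same direction) of $\Sigma$. A facewise affine $H$ is convex if for each cell $\sigma$ there is an affine $L_\sigma$ on $\mathbb R^N$ with $H=L_\sigma$ on $\sigma$ and $H-L_\sigma\ge0$ on $\eta\setminus\sigma$ for every cell $\eta\supseteq\sigma$; strictly convex if these inequalities are strict. *)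

(* Defs.v *)
From HB Require Import structures.
From mathcomp Require Import all_boot all_order all_algebra.
From mathcomp Require Export reals.
Set Implicit Arguments. Unset Strict Implicit. Unset Printing Implicit Defensive.
Import Order.TTheory GRing.Theory Num.Theory.
Local Open Scope ring_scope.

Section PolyComplex.
Variables (R : realType) (N : nat).

Definition pt := 'rV[R]_N.

Definition iaff := ('rV[int]_N * rat)%type.
Definition iaff_eval (L : iaff) (u : pt) : R :=
  \sum_(i < N) (L.1 0 i)%:~R * u 0 i + ratr L.2.

Definition aff_eval (a : pt) (b : R) (u : pt) : R :=
  \sum_(i < N) a 0 i * u 0 i + b.

Definition polyhedron := seq iaff.
Definition poly_set (P : polyhedron) : pt -> Prop :=
  fun u => forall L, L \in P -> 0 <= iaff_eval L u.

Definition is_face (F P : pt -> Prop) : Prop :=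
  (exists u, F u) /\
  exists (a : pt) (b : R), (forall u, P u -> 0 <= aff_eval a b u) /\
    (forall u, F u <-> (P u /\ aff_eval a b u = 0)).

Definition complex := seq polyhedron.

Definition is_cell (S : complex) (C : pt -> Prop) : Prop :=
  exists2 P, P \in S & forall u, C u <-> poly_set P u.

Definition is_complex (S : complex) : Prop :=
  [/\ (forall P, P \in S -> exists u, poly_set P u),
      (forall P, P \in S -> forall F, is_face F (poly_set P) -> is_cell S F) &
      (forall P Q, P \in S -> Q \in S ->
         (forall u, ~ (poly_set P u /\ poly_set Q u)) \/
         (is_face (fun u => poly_set P u /\ poly_set Q u) (poly_set P) /\
          is_face (fun u => poly_set P u /\ poly_set Q u) (poly_set Q)))].

Definition full_support (S : complex) : Prop :=
  forall u : pt, exists2 P, P \in S & poly_set P u.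

Definition subcomplex (S' S : complex) : Prop :=
  is_complex S' /\ forall P, P \in S' -> is_cell S (poly_set P).

Definition facewise_affine (S : complex) (H : pt -> R) : Prop :=
  forall P, P \in S -> exists (a : pt) (b : R),
    forall u, poly_set P u -> H u = aff_eval a b u.

Definition facewise_iaffine (S : complex) (H : pt -> R) : Prop :=
  forall P, P \in S -> exists L : iaff,
    forall u, poly_set P u -> H u = iaff_eval L u.

Definition one_dim (C : pt -> Prop) : Prop :=
  exists (p w : pt), forall u, C u -> exists t : R, u = p + t *: w.

Definition ray_in (C : pt -> Prop) (p v : pt) : Prop :=
  v != 0 /\ forall t : R, 0 <= t -> C (p + t *: v).

Definition parallel_slopes (S : complex) (H : pt -> R) : Prop :=
  forall P Q, P \in S -> Q \in S ->
    one_dim (poly_set P) -> one_dim (poly_set Q) ->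
    forall p q v : pt, ray_in (poly_set P) p v -> ray_in (poly_set Q) q v ->
      H (p + v) - H p = H (q + v) - H q.

(* finite elements of Rat(S) *)
Definition in_Rat (S : complex) (H : pt -> R) : Prop :=
  facewise_iaffine S H /\ parallel_slopes S H.

Definition strictly_convex (S : complex) (H : pt -> R) : Prop :=
  facewise_affine S H /\
  forall P, P \in S -> exists (a : pt) (b : R),
    (forall u, poly_set P u -> H u = aff_eval a b u) /\
    (forall Q, Q \in S -> (forall u, poly_set P u -> poly_set Q u) ->
       forall u, poly_set Q u -> ~ poly_set P u -> 0 < H u - aff_eval a b u).

End PolyComplex.

(* Main.v *)
Require Import Defs.
From mathcomp Require Import all_boot all_order all_algebra.
From mathcomp Require Import reals ring lra.
From Stdlib Require Import Classical.
Import Order.TTheory GRing.Theory Num.Theory.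
Local Open Scope ring_scope.

Section Farkas.
Variables (R : realFieldType) (V : lmodType R).

Definition lin (phi : V -> R) := forall (k : R) (x y : V), phi (k *: x + y) = k * phi x + phi y.

Lemma lin0 phi : lin phi -> phi 0 = 0.
Proof. move=> l; have := l 1 0 0; rewrite scaler0 addr0 mul1r.
by rewrite -{1}[phi 0]addr0 => /addrI <-. Qed.

Lemma linD phi x y : lin phi -> phi (x + y) = phi x + phi y.
Proof. by move=> l; have := l 1 x y; rewrite scale1r mul1r. Qed.

Lemma linZ phi k x : lin phi -> phi (k *: x) = k * phi x.
Proof. by move=> l; rewrite -(addr0 (k *: x)) l (lin0 _ l) addr0. Qed.

Lemma lin_comb phi psi c : lin phi -> lin psi -> lin (fun x => phi x - c * psi x).
Proof. move=> l1 l2 k x y; rewrite l1 l2; ring. Qed.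

Lemma farkas m : forall (a : nat -> V -> R) (h : V -> R),
  (forall i, lin (a i)) -> lin h ->
  (forall x, (forall i, (i < m)%N -> 0 <= a i x) -> 0 <= h x) ->
  exists c : nat -> R, (forall i, 0 <= c i) /\
    forall x, h x = \sum_(i < m) c i * a i x.
Proof.
elim: m => [|m IH] a h la lh H.
  exists (fun _ => 0); split=> // x; rewrite big_ord0.
  have h1 := H x (fun i hi => ltac:(done)).
  have h2 := H (- x) (fun i hi => ltac:(done)).
  rewrite -scaleN1r linZ // mulN1r oppr_ge0 in h2.
  by apply/le_anti; rewrite h1 h2.
case: (classic (forall x, (forall i, (i < m)%N -> 0 <= a i x) -> 0 <= h x)) => [Hm|Hm].
  have [c [c0 hc]] := IH a h la lh Hm.
  exists (fun i => if i == m then 0 else c i); split.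
    by move=> i; case: ifP.
  move=> x; rewrite big_ord_recr /= eqxx mul0r addr0 hc.
  by apply: eq_bigr => i _; rewrite ltn_eqF.
have [x0 Hx0] : exists x0, ~ ((forall i, (i < m)%N -> 0 <= a i x0) -> 0 <= h x0).
  by apply: not_all_ex_not.
have [Ha0 Hh0] : (forall i, (i < m)%N -> 0 <= a i x0) /\ h x0 < 0.
  split; first by apply: NNPP => Hn; apply: Hx0 => H'; case: (Hn H').
  by rewrite ltNge; apply/negP => Hp; apply: Hx0.
set b := a m; set be := b x0.
have hbe : be < 0.
  rewrite ltNge; apply/negP => Hp; move: (H x0); rewrite leNgt Hh0 /= => H'.
  have := H' (fun i hi => ltac:(move: hi; rewrite ltnS leq_eqVlt => /orP [/eqP->//|];
     exact: Ha0)); done.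
have be0 : be != 0 by rewrite ltr0_neq0.
pose a' i := fun x => a i x - (a i x0 / be) * b x.
pose h' := fun x => h x - (h x0 / be) * b x.
have la' : forall i, lin (a' i) by move=> i; rewrite /a'; apply: lin_comb; apply: la.
have lh' : lin h' by rewrite /h'; apply: lin_comb => //; apply: la.
have H' : forall x, (forall i, (i < m)%N -> 0 <= a' i x) -> 0 <= h' x.
  move=> x Hx; pose y := x - (b x / be) *: x0.
  have ey : forall phi, lin phi -> phi y = phi x - (phi x0 / be) * b x.
    move=> phi l; rewrite /y linD // -scaleNr linZ //; field.
    by [].
  have := H y; rewrite ey // => -> // i; rewrite ltnS leq_eqVlt => /orP [/eqP->|/Hx].
    by rewrite ey // -/b -/be divff // mul1r subrr.
  by rewrite ey.
have [c [c0 hc]] := IH a' h' la' lh' H'.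
pose mu := (h x0 - \sum_(i < m) c i * a i x0) / be.
have mu0 : 0 <= mu.
  rewrite /mu ler_ndivlMr // mul0r; apply: ltW.
  rewrite subr_lt0; apply: (lt_le_trans Hh0); apply: sumr_ge0 => i _.
  by apply: mulr_ge0 => //; apply: Ha0.
exists (fun i => if i == m then mu else c i); split.
  by move=> i; case: ifP.
move=> x; rewrite big_ord_recr /= eqxx.
rewrite (eq_bigr (fun i : 'I_m => c i * a i x)); last by move=> i _; rewrite ltn_eqF.
have := hc x; rewrite /h' /a' => e.
have e2 : \sum_(i < m) c i * (a i x - a i x0 / be * b x) =
   \sum_(i < m) c i * a i x - (\sum_(i < m) c i * a i x0) / be * b x.
  rewrite !mulr_suml -sumrB; apply: eq_bigr => i _; ring.
rewrite e2 in e; rewrite /mu.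
have -> : h x = h x - h x0 / be * b x + h x0 / be * b x by ring.
rewrite e -/b; ring.
Qed.

End Farkas.
Arguments lin {R V} phi.
Arguments lin0 {R V} phi.
Arguments linD {R V} phi.
Arguments linZ {R V} phi.
Arguments lin_comb {R V} phi psi c.
Arguments farkas {R V} m.

Section Key.
Variables (R : realType) (N : nat).
Local Notation V := ('rV[R]_N * R^o)%type.
Local Notation pt := (pt R N).

Definition homf (a : 'I_N -> R) (b : R) (z : V) : R :=
  \sum_i a i * z.1 0 i + b * z.2.

Lemma lin_hom a b : lin (homf a b).
Proof.
move=> k x y; rewrite /homf /=.
rewrite (eq_bigr (fun i => k * (a i * x.1 0 i) + a i * y.1 0 i)); last first.
  by move=> i _; rewrite !mxE mulrDr mulrCA.
rewrite big_split /= -mulr_sumr.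
change (k *: x.2) with (k * x.2); ring.
Qed.

Lemma iaff_hom (L : iaff N) u :
  iaff_eval L u = homf (fun i => (L.1 0 i)%:~R) (ratr L.2) (u, 1).
Proof. by rewrite /iaff_eval /homf /= mulr1. Qed.

Lemma aff_hom (a : pt) b u : aff_eval a b u = homf (fun i => a 0 i) b (u, 1).
Proof. by rewrite /aff_eval /homf /= mulr1. Qed.

Lemma homog (phi : V -> R) (p0 u : pt) (t : R) : lin phi -> 0 <= t ->
  phi (u, t) + phi (p0, 1) = (1 + t) * phi ((1 + t)^-1 *: (u + p0), 1).
Proof.
move=> l t0.
have nz : 1 + t != 0 by rewrite gt_eqF // ltr_wpDr.
rewrite -(linD phi) // -(linZ phi) //.
congr phi; rewrite /GRing.scale /= /GRing.add /=.
congr pair; first by rewrite scalerA mulfV // scale1r.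
by rewrite /GRing.scale /= mulr1 addrC.
Qed.

Lemma key (Q : polyhedron N) (f g : pt -> R) (ff gf : V -> R) (p0 : pt) :
 lin ff -> lin gf -> (forall u, ff (u,1) = f u) -> (forall u, gf (u,1) = g u) ->
 poly_set Q p0 -> g p0 = 0 -> f p0 = 0 ->
 (forall u, poly_set Q u -> 0 <= g u) ->
 (forall u, poly_set Q u -> g u = 0 -> f u = 0) ->
 exists k : R, 0 <= k /\ forall u, poly_set Q u -> 0 <= f u + k * g u.
Proof.
move=> lff lgf hf hg Qp0 gp0 fp0 gpos gzero.
pose phiL (L : iaff N) := homf (fun i => (L.1 0 i)%:~R) (ratr L.2).
pose a := fun i : nat => match i with
   | 0 => fun z : V => - gf z | 1 => fun z : V => z.2
   | j.+2 => phiL (nth (0 : 'rV[int]_N, 0 : rat) Q j) end.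
have la : forall i, lin (a i).
  case=> [|[|j]] /=.
  - by move=> k x y; rewrite lgf; ring.
  - by move=> k x y.
  - exact: lin_hom.
have Hp : forall z, (forall i, (i < (size Q).+2)%N -> 0 <= a i z) -> 0 <= ff z.
  move=> [u t] Hz.
  have t0 : 0 <= t := Hz 1%N erefl.
  have g0 : 0 <= - gf (u,t) := Hz 0%N erefl.
  have tp : 0 < 1 + t by rewrite ltr_wpDr.
  set x := (1+t)^-1 *: (u + p0).
  have Qx : poly_set Q x.
    move=> L LQ.
    have := Hz (index L Q).+2; rewrite /= ltnS ltnS index_mem nth_index // => /(_ LQ) H1.
    rewrite iaff_hom -(pmulr_rge0 _ tp) -homog //; last exact: lin_hom.
    by apply: addr_ge0 => //; rewrite -iaff_hom; apply: Qp0.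
  have gx : g x = 0.
    apply/le_anti; rewrite gpos // andbT.
    rewrite -hg -(pmulr_rle0 _ tp) -homog // hg gp0 addr0.
    by rewrite -oppr_ge0.
  have fx := gzero _ Qx gx.
  have := homog ff p0 u t lff t0; rewrite hf hf -/x fx fp0 addr0 mulr0 => ->.
  by [].
have [c [c0 hc]] := farkas (size Q).+2 a ff la lff Hp.
exists (c 0%N); split => // u Qu.
rewrite -hf hc big_ord_recl /= hg.
have -> : forall A B : R, c 0%N * - g u + A + B * g u = A + (B - c 0%N) * g u.
  by move=> A B; ring.
rewrite subrr mul0r addr0; apply: sumr_ge0 => i _; apply: mulr_ge0 => //.
rewrite add0n; case: i => [[|j]] hj /=; first exact: ler01.
rewrite /phiL -iaff_hom; apply: Qu; apply: mem_nth.
by move: hj; rewrite ltnS.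
Qed.

End Key.
Arguments homf {R N}.
Arguments lin_hom {R N}.
Arguments iaff_hom {R N}.
Arguments aff_hom {R N}.
Arguments homog {R N}.
Arguments key {R N}.

Section Main.
Variables (R : realType) (N : nat).
Local Notation pt := (pt R N).

Lemma aff_comb (a1 a2 : pt) b1 b2 k u :
  aff_eval (a1 + k *: a2) (b1 + k * b2) u = aff_eval a1 b1 u + k * aff_eval a2 b2 u.
Proof.
rewrite /aff_eval (eq_bigr (fun i => a1 0 i * u 0 i + k * (a2 0 i * u 0 i))).
  by rewrite big_split /= -mulr_sumr; ring.
by move=> i _; rewrite !mxE; ring.
Qed.

Lemma fin_bound (T : eqType) (s : seq T) (Phi : T -> nat -> Prop) :
  (forall x, x \in s -> exists n, forall K, (n <= K)%N -> Phi x K) ->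
  exists n, forall K, (n <= K)%N -> forall x, x \in s -> Phi x K.
Proof.
elim: s => [|y s IH] H; first by exists 0%N.
have [n1 h1] := H y (mem_head _ _).
have [n2 h2] := IH (fun x xs => H x (ltac:(by rewrite in_cons xs orbT))).
exists (maxn n1 n2) => K hK x; rewrite in_cons => /orP [/eqP->|xs].
  by apply: h1; apply: leq_trans hK; apply: leq_maxl.
by apply: h2 => //; apply: leq_trans hK; apply: leq_maxr.
Qed.

Lemma mainlem (S : complex N) (Hh F : pt -> R) :
  is_complex R S -> strictly_convex S Hh -> facewise_affine S F ->
  exists n, forall K, (n <= K)%N -> strictly_convex S (fun u => F u + K%:R * Hh u).
Proof.
move=> [Cne _ _] [HhA HhS] FA.
suff : exists n, forall K, (n <= K)%N -> forall P, P \in S -> exists (a : pt) (b : R),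
   (forall u, poly_set P u -> F u + K%:R * Hh u = aff_eval a b u) /\
   (forall Q, Q \in S -> (forall u : pt, poly_set P u -> poly_set Q u) ->
       forall u, poly_set Q u -> ~ poly_set P u -> 0 < F u + K%:R * Hh u - aff_eval a b u).
  move=> [n Hn]; exists n => K hK; split; last exact: Hn.
  by move=> P PS; have [a [b [h1 _]]] := Hn K hK P PS; exists a, b.
apply: fin_bound => P PS.
have [aH [bH [eH sH]]] := HhS P PS.
have [aF [bF eF]] := FA P PS.
have [p0 Pp0] := Cne P PS.
suff : exists n, forall K, (n <= K)%N -> forall Q, Q \in S ->
   (forall u : pt, poly_set P u -> poly_set Q u) ->
   forall u, poly_set Q u -> ~ poly_set P u ->
   0 < F u + K%:R * Hh u - aff_eval (aF + K%:R *: aH) (bF + K%:R * bH) u.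
  move=> [n Hn]; exists n => K hK; exists (aF + K%:R *: aH), (bF + K%:R * bH); split; last exact: Hn.
  by move=> u Pu; rewrite aff_comb eF // eH.
apply: fin_bound => Q QS.
case: (classic (forall u : pt, poly_set P u -> poly_set Q u)) => [PQ|nPQ]; last first.
  by exists 0%N => K _ PQ; case: nPQ.
have [aFQ [bFQ eFQ]] := FA Q QS.
have [aHQ [bHQ eHQ]] := HhA Q QS.
pose f u := aff_eval aFQ bFQ u - aff_eval aF bF u.
pose g u := aff_eval aHQ bHQ u - aff_eval aH bH u.
pose ff (z : (Defs.pt R N * R^o)%type) := homf (fun i => aFQ 0 i) bFQ z - 1 * homf (fun i => aF 0 i) bF z.
pose gf (z : (Defs.pt R N * R^o)%type) := homf (fun i => aHQ 0 i) bHQ z - 1 * homf (fun i => aH 0 i) bH z.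
have gpos : forall u, poly_set Q u -> ~ poly_set P u -> 0 < g u.
  by move=> u Qu nPu; have := sH Q QS PQ u Qu nPu; rewrite /g -eHQ.
have [k [k0 hk]] : exists k : R, 0 <= k /\ forall u, poly_set Q u -> 0 <= f u + k * g u.
  apply: (key Q f g ff gf p0).
  - by apply: lin_comb; apply: lin_hom.
  - by apply: lin_comb; apply: lin_hom.
  - by move=> u; rewrite /ff /f mul1r -!aff_hom.
  - by move=> u; rewrite /gf /g mul1r -!aff_hom.
  - exact: PQ.
  - by rewrite /g -(eHQ p0 (PQ _ Pp0)) -(eH p0 Pp0) subrr.
  - by rewrite /f -(eFQ p0 (PQ _ Pp0)) -(eF p0 Pp0) subrr.
  - move=> u Qu; case: (classic (poly_set P u)) => Pu.
      by rewrite /g -(eHQ u Qu) -(eH u Pu) subrr.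
    exact: ltW (gpos u Qu Pu).
  - move=> u Qu gu; case: (classic (poly_set P u)) => Pu.
      by rewrite /f -(eFQ u Qu) -(eF u Pu) subrr.
    by have := gpos u Qu Pu; rewrite gu ltxx.
exists (Num.Def.archi_bound k) => K hK _ u Qu nPu.
have hn := archi_boundP k0.
have kK : k < K%:R by apply: (lt_le_trans hn); rewrite ler_nat.
rewrite aff_comb (eFQ u Qu) (eHQ u Qu).
have -> : aff_eval aFQ bFQ u + K%:R * aff_eval aHQ bHQ u -
    (aff_eval aF bF u + K%:R * aff_eval aH bH u) =
    (f u + k * g u) + (K%:R - k) * g u by rewrite /f /g; ring.
apply: ltr_wpDl (hk u Qu) _; apply: mulr_gt0; last exact: gpos.
by rewrite subr_gt0.
Qed.


Lemma rat_sub (S S' : complex N) (G : pt -> R) :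
  subcomplex R S' S -> in_Rat S G -> in_Rat S' G.
Proof.
move=> [_ Hc] [GI GS]; split.
  move=> P' P'S; have [P PS eP] := Hc P' P'S.
  have [L eL] := GI P PS; exists L => u Pu; apply: eL; exact: (eP u).1.
move=> P' Q' P'S Q'S oP oQ p q v rP rQ.
have [P PS eP] := Hc P' P'S; have [Q QS eQ] := Hc Q' Q'S.
apply: (GS P Q PS QS).
- by move: oP => [p1 [w h]]; exists p1, w => u Pu; apply: h; exact: (eP u).2.
- by move: oQ => [p1 [w h]]; exists p1, w => u Pu; apply: h; exact: (eQ u).2.
- by move: rP => [v0 h]; split => // t t0; apply: (eP _).1; apply: h.
- by move: rQ => [v0 h]; split => // t t0; apply: (eQ _).1; apply: h.
Qed.

Lemma iaff_comb (L1 L2 : iaff N) (K : nat) (u : pt) :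
  iaff_eval (L1.1 + (K%:R : int) *: L2.1, L1.2 + (K%:R : rat) * L2.2) u =
  iaff_eval L1 u + K%:R * iaff_eval L2 u.
Proof.
rewrite /iaff_eval /=.
rewrite (eq_bigr (fun i => (L1.1 0 i)%:~R * u 0 i + K%:R * ((L2.1 0 i)%:~R * u 0 i))); last first.
  by move=> i _; rewrite !mxE intrD intrM mulrz_nat; ring.
rewrite big_split /= -mulr_sumr rmorphD rmorphM /= ratr_nat; ring.
Qed.

Lemma rat_comb (S' : complex N) (G1 G2 : pt -> R) (K : nat) :
  in_Rat S' G1 -> in_Rat S' G2 -> in_Rat S' (fun u => G1 u + K%:R * G2 u).
Proof.
move=> [I1 S1] [I2 S2]; split.
  move=> P PS; have [L1 e1] := I1 P PS; have [L2 e2] := I2 P PS.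
  by exists (L1.1 + (K%:R : int) *: L2.1, L1.2 + (K%:R : rat) * L2.2) => u Pu;
    rewrite iaff_comb -e1 // -e2.
move=> P Q PS QS oP oQ p q v rP rQ.
have h1 := S1 P Q PS QS oP oQ p q v rP rQ.
have h2 := S2 P Q PS QS oP oQ p q v rP rQ.
have e : forall a b c d : R, a + K%:R * b - (c + K%:R * d) = (a - c) + K%:R * (b - d).
  by move=> a b c d; ring.
by rewrite !e h1 h2.
Qed.

Lemma rat0 (S' : complex N) : in_Rat S' (fun _ : pt => 0).
Proof.
split; last by move=> *; rewrite !subrr.
move=> P PS; exists (0, 0) => u _; rewrite /iaff_eval /= big1 ?rmorph0 ?addr0 //.
by move=> i _; rewrite mxE mul0r.
Qed.

Lemma fa0 (S : complex N) : facewise_affine S (fun _ : pt => 0).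
Proof.
move=> P PS; exists 0, 0 => u _; rewrite /aff_eval big1 ?addr0 //.
by move=> i _; rewrite mxE mul0r.
Qed.

End Main.
Arguments mainlem {R N}.
Arguments rat_sub {R N}.
Arguments rat_comb {R N}.
Arguments rat0 {R N}.
Arguments fa0 {R N}.

Theorem proposition5p3 (R : realType) (N : nat) (S S' : complex N) :
  is_complex R S -> full_support R S ->
  (exists Hh : pt R N -> R, in_Rat S Hh /\ strictly_convex S Hh) ->
  subcomplex R S' S ->
  forall F : pt R N -> R, facewise_affine S F ->
    (exists H1 H2 : pt R N -> R,
        [/\ strictly_convex S H1, strictly_convex S H2 &
            forall u, F u = H1 u - H2 u]) /\
    (in_Rat S' F ->
     exists H1 H2 : pt R N -> R,
        [/\ strictly_convex S H1, strictly_convex S H2,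
            in_Rat S' H1, in_Rat S' H2 &
            forall u, F u = H1 u - H2 u]).
Proof.
move=> SC _ [Hh [HhR HhS]] Ssub F FA.
have [n1 h1] := mainlem S Hh F SC HhS FA.
have [n2 h2] := mainlem S Hh (fun _ => 0) SC HhS (fa0 S).
pose K := maxn n1 n2.
have s1 := h1 K (leq_maxl _ _).
have s2 := h2 K (leq_maxr _ _).
have eF : forall u, F u = (F u + K%:R * Hh u) - (0 + K%:R * Hh u).
  by move=> u; rewrite add0r addrK.
split.
  by exists (fun u => F u + K%:R * Hh u), (fun u => 0 + K%:R * Hh u); split.
move=> FR.
exists (fun u => F u + K%:R * Hh u), (fun u => 0 + K%:R * Hh u); split => //.
  exact: (rat_comb S' F Hh K FR (rat_sub S S' Hh Ssub HhR)).
exact: (rat_comb S' (fun _ => 0) Hh K (rat0 S') (rat_sub S S' Hh Ssub HhR)).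
Qed.
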